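(* For $n\in\mathbb{N}$, $z(n)=f(n)$ if and only if $n=0$ or $n=F_{2k+1}$ for some integer $k\ge0$.
   Context: $\mathbb{N}=\{0,1,2,\dots\}$. Fibonacci numbers: $F_0=0$, $F_1=1$, $F_k=F_{k-1}+F_{k-2}$. The sequence $f:\mathbb{N}\to\mathbb{N}$ is defined greedily: $f(0)=0$, and for $n\ge1$, $f(n)$ is the least natural number such that (i) $f(n)\notin\{f(0),f(1),\dots,f(n-1)\}$ and (ii) $\sum_{1\le i\le n} f(i)$ is divisible by $n$. The sequence $z:\mathbb{N}\to\mathbb{N}$ is defined greedily: $z(0)=0$, and for $n\ge1$, $z(n)$ is the least natural number such that (i) $z(n)\notin\{z(0),\dots,z(n-1)\}$ and (ii) $\sum_{2\le i\le n} z(i)$ is divisible by $n+1$ (the empty sum being $0$). *)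

(* Defs.v *)
From mathcomp Require Import all_boot.
Set Implicit Arguments. Unset Strict Implicit. Unset Printing Implicit Defensive.

Fixpoint fib (k : nat) : nat :=
  match k with
  | 0 => 0
  | 1 => 1
  | (k'.+1 as k1).+1 => fib k1 + fib k'
  end.

Definition greedy_ok (lo d : nat) (g : nat -> nat) (n m : nat) : Prop :=
  (m \notin [seq g i | i <- iota 0 n]) /\
  (n + d %| \sum_(lo <= i < n.+1) (if i == n then m else g i)).

Definition greedy_seq (lo d : nat) (g : nat -> nat) : Prop :=
  g 0 = 0 /\
  forall n, 0 < n ->
    greedy_ok lo d g n (g n) /\
    (forall m, greedy_ok lo d g n m -> g n <= m).

Definition is_f (f : nat -> nat) : Prop := greedy_seq 1 0 f.
Definition is_z (z : nat -> nat) : Prop := greedy_seq 2 1 z.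

(* Main.v *)
Require Import Defs.
From mathcomp Require Import all_boot zify.
Set Implicit Arguments. Unset Strict Implicit. Unset Printing Implicit Defensive.

Fixpoint A (n : nat) : nat :=
  match n with
  | 0 => 0
  | k.+1 => let m := A k in if (m.+1) * (m.+1 + k.+1) <= k.+1 * k.+1 then m.+1 else m
  end.

Fixpoint B (n : nat) : nat :=
  match n with
  | 0 => 0
  | k.+1 => let m := B k in if (m.+1) * (m.+1 + k.+1) + 2 <= k.+1 * k.+1 then m.+1 else m
  end.

Lemma A_spec n : A n * (A n + n) <= n * n /\ n * n < (A n).+1 * ((A n).+1 + n).
Proof.
elim: n => [|n [IH1 IH2]] //=.
case: ifP => H.
  split => //. nia.
split. nia. nia.
Qed.

Lemma B_spec n : 2 <= n -> B n * (B n + n) + 2 <= n * n /\ n * n < (B n).+1 * ((B n).+1 + n) + 2.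
Proof.
elim: n => [|n IH] //= Hn.
case: (ltnP 1 n) => Hn1; last first.
  have -> : n = 1 by lia.
  by [].
move: (IH Hn1) => [IH1 IH2].
case: ifP => H.
  split => //. nia.
split. nia. nia.
Qed.

Lemma A_S n : A n.+1 = A n \/ A n.+1 = (A n).+1.
Proof. rewrite /=; case: ifP; by auto. Qed.
Lemma B_S n : B n.+1 = B n \/ B n.+1 = (B n).+1.
Proof. rewrite /=; case: ifP; by auto. Qed.

Lemma A_mono m n : m <= n -> A m <= A n.
Proof.
move=> /subnK <-; elim: (n - m) => [|k IH] //.
rewrite addSn; case: (A_S (k + m)) => ->; lia.
Qed.
Lemma B_mono m n : m <= n -> B m <= B n.
Proof.
move=> /subnK <-; elim: (n - m) => [|k IH] //.
rewrite addSn; case: (B_S (k + m)) => ->; lia.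
Qed.

Lemma irr x n : x * (x + n) = n * n -> n = 0.
Proof.
elim/ltn_ind: n x => n IH x H.
case: (posnP n) => // Hn.
have Hx : x < n by nia.
case: (posnP x) => Hx0. subst x. nia.
have := IH x Hx (n - x).
have -> : (n - x) * (n - x + x) = x * x by nia.
move=> /(_ erefl) H0. subst x. by [].
Qed.

Lemma A_ge n k : k <= A n <-> k * (k + n) <= n * n.
Proof.
have [H1 H2] := A_spec n. split => H.
  apply: leq_trans H1. apply: leq_mul => //. lia.
case: (leqP k (A n)) => // Hk.
have : (A n).+1 * ((A n).+1 + n) <= k * (k + n) by apply: leq_mul => //; lia.
lia.
Qed.

Lemma A_le n k : A n <= k <-> n * n < k.+1 * (k.+1 + n).
Proof.
split => H.
  have [H1 H2] := A_spec n.
  apply: (leq_trans H2). apply: leq_mul => //; lia.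
case: (leqP (A n) k) => // Hk.
have := proj1 (A_ge n k.+1) Hk. lia.
Qed.

Lemma A_strict n : 0 < n -> A n * (A n + n) < n * n.
Proof.
move=> Hn. have [H1 _] := A_spec n.
rewrite ltn_neqAle H1 andbT. apply/eqP => /irr. lia.
Qed.

Lemma B_ge n k : 2 <= n -> (k <= B n <-> k * (k + n) + 2 <= n * n).
Proof.
move=> Hn. have [H1 H2] := B_spec Hn. split => H.
  apply: leq_trans H1. rewrite leq_add2r. apply: leq_mul => //. lia.
case: (leqP k (B n)) => // Hk.
have : (B n).+1 * ((B n).+1 + n) <= k * (k + n) by apply: leq_mul => //; lia.
lia.
Qed.

Lemma B_le n k : 2 <= n -> (B n <= k <-> n * n < k.+1 * (k.+1 + n) + 2).
Proof.
move=> Hn. split => H.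
  have [H1 H2] := B_spec Hn.
  apply: (leq_trans H2). rewrite leq_add2r. apply: leq_mul => //; lia.
case: (leqP (B n) k) => // Hk.
have := proj1 (B_ge k.+1 Hn) Hk. lia.
Qed.


Lemma A_no2 n : (A n).+1 <= A n.+2.
Proof.
apply/A_ge. have [H1 _] := A_spec n. move: (A n) H1 => a H1. nia.
Qed.

Lemma A_no3 n : A n.+3 <= (A n).+2.
Proof.
apply/A_le. have [_ H1] := A_spec n. move: (A n) H1 => a H1. nia.
Qed.

Lemma B_no2 n : 2 <= n -> (B n).+1 <= B n.+2.
Proof.
move=> Hn. apply/B_ge; first lia. have [H1 _] := B_spec Hn. move: (B n) H1 => a H1. nia.
Qed.

Lemma B_no3 n : 2 <= n -> B n.+3 <= (B n).+2.
Proof.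
move=> Hn. apply/B_le; first lia. have [_ H1] := B_spec Hn. move: (B n) H1 => a H1. nia.
Qed.

Lemma A_lt n : 0 < n -> A n < n.
Proof. move=> Hn. have [H1 _] := A_spec n. move: (A n) H1 => a H1. nia. Qed.

Lemma B_le_A n : 2 <= n -> B n <= A n.
Proof. move=> Hn. apply/A_ge. have [H1 _] := B_spec Hn. lia. Qed.

Lemma B2 : B 2 = 0. Proof. by []. Qed.
Lemma B3 : B 3 = 1. Proof. by []. Qed.
Lemma B4 : B 4 = 2. Proof. by []. Qed.
Lemma A2 : A 2 = 1. Proof. by []. Qed.


Definition F (n : nat) : nat :=
  if n is k.+1 then (if A n == A k then (A n).+1 else n + A n) else 0.
Definition Z (n : nat) : nat :=
  if n <= 1 then n else if B n.+1 == B n then B n.+1 else B n.+1 + n.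

Lemma F_small n : 0 < n -> A n = A n.-1 -> F n = (A n).+1.
Proof. by case: n => // n _ /= ->; rewrite eqxx. Qed.
Lemma F_large n : 0 < n -> A n = (A n.-1).+1 -> F n = n + A n.
Proof. case: n => // n _ /= E. rewrite E. case: eqP => //. lia. Qed.
Lemma F_cases n : 0 < n ->
  (A n = A n.-1 /\ F n = (A n).+1) \/ (A n = (A n.-1).+1 /\ F n = n + A n).
Proof.
move=> Hn. have := A_S n.-1. rewrite prednK // => -[E|E].
  by left; split => //; apply: F_small.
by right; split => //; apply: F_large.
Qed.

Lemma Z_small n : 2 <= n -> B n.+1 = B n -> Z n = B n.+1.
Proof. move=> Hn E. rewrite /Z. have -> : (n <= 1) = false by lia. by rewrite E eqxx. Qed.
Lemma Z_large n : 2 <= n -> B n.+1 = (B n).+1 -> Z n = B n.+1 + n.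
Proof. move=> Hn E. rewrite /Z. have -> : (n <= 1) = false by lia. rewrite E. case: eqP => //. lia. Qed.
Lemma Z_cases n : 2 <= n ->
  (B n.+1 = B n /\ Z n = B n.+1) \/ (B n.+1 = (B n).+1 /\ Z n = B n.+1 + n).
Proof.
move=> Hn. case: (B_S n) => E.
  by left; split => //; apply: Z_small.
by right; split => //; apply: Z_large.
Qed.

Lemma sum_F n : \sum_(1 <= i < n.+1) F i = n * (A n).+1.
Proof.
elim: n => [|n IH]; first by rewrite big_geq.
rewrite big_nat_recr //= IH.
case: (F_cases (ltn0Sn n)) => /= -[E1 E2]; rewrite E2; nia.
Qed.

Lemma sum_Z n : 0 < n -> \sum_(2 <= i < n.+1) Z i = n.+1 * B n.+1.
Proof.
elim: n => [|n IH] // _.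
case: (posnP n) => Hn.
  subst n. by rewrite big_geq.
rewrite big_nat_recr; last lia.
rewrite IH //.
case: (Z_cases (_ : 2 <= n.+1)) => [|[E1 E2]|[E1 E2]]; rewrite ?E2 ?E1; change (_ (n.+1 * B n.+1) ?x = ?y) with (n.+1 * B n.+1 + x = y); nia.
Qed.

Lemma A_mix s l : 0 < s -> 0 < l -> A l = (A l.-1).+1 -> A s.-1 = A s ->
  A s <> l + A l - 1.
Proof.
move=> Hs Hl Hjl Hns E.
set w := A l in Hjl E.
have Hw : 0 < w by lia.
have H1 : A (2 * l + w - 2) <= l + w - 2.
  apply/A_le. have HL : A l.-1 <= w.-1 by lia.
  have := proj1 (A_le l.-1 w.-1) HL.
  have -> : w.-1.+1 = w by lia.
  move=> H. have -> : (l + w - 2).+1 = l.-1 + w by lia.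
  have -> : 2 * l + w - 2 = 2 * l.-1 + w by lia.
  move: H; move: (l.-1) => L. clear. nia.
have H2 : l + w <= A (2 * l + w).
  apply/A_ge. have := proj1 (A_ge l w) (leqnn _). move: (w) => w0. clear. nia.
have H3 : 2 * l + w <= s.
  case: (leqP (2 * l + w) s) => // H.
  have HH : s.-1 <= 2 * l + w - 2 by lia.
  have := A_mono HH. lia.
have := A_mono H3. lia.
Qed.

Lemma B_mix s l : 2 <= s -> 2 <= l -> B l.+1 = (B l).+1 -> B s.+1 = B s ->
  B s.+1 <> B l.+1 + l.
Proof.
move=> Hs Hl Hjl Hns E.
set w := B l in Hjl E.
have H1 : B (2 * l + w + 1) <= l + w.
  apply/B_le; first lia. have HL : B l <= w by [].
  have := proj1 (B_le w Hl) HL. move: (w) => w0. clear. nia.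
have H2 : l + w + 2 <= B (2 * l + w + 3).
  apply/B_ge; first lia. have HL : w.+1 <= B l.+1 by rewrite Hjl.
  have Hl1 : 2 <= l.+1 by lia.
  have := proj1 (B_ge w.+1 Hl1) HL. move: (w) => w0. clear. nia.
have H3 : 2 * l + w + 2 <= s.
  case: (leqP (2 * l + w + 2) s) => // H.
  have HH : s <= 2 * l + w + 1 by lia.
  have := B_mono HH. lia.
have HH : 2 * l + w + 3 <= s.+1 by lia.
have := B_mono HH. lia.
Qed.


Lemma F_pos n : 0 < n -> 0 < F n.
Proof. move=> Hn. case: (F_cases Hn) => -[_ ->]; lia. Qed.

Lemma F_inj i n : i < n -> F i <> F n.
Proof.
move=> Hin.
have Hn : 0 < n by lia.
case: (posnP i) => Hi.
  subst i. have := F_pos Hn. rewrite /=. lia.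
case: (F_cases Hi) => -[Ei Fi]; case: (F_cases Hn) => -[En Fn]; rewrite Fi Fn.
- move=> E.
  have H1 := A_no2 i.-1. have Ei2 : i.-1.+2 = i.+1 by lia. rewrite Ei2 in H1.
  have H2 : i.+1 <= n by [].
  have := A_mono H2. lia.
- move=> E. have := A_mix Hi Hn En (esym Ei). lia.
- move=> E. have := A_mix Hn Hi Ei (esym En). lia.
- have := A_mono (ltnW Hin). lia.
Qed.

Lemma Z_ge2 n : 2 <= n -> 2 <= Z n.
Proof.
move=> Hn. case: (Z_cases Hn) => -[E ->]; last lia.
case: (leqP n 2) => H.
  have Hn2 : n = 2 by lia. subst n. by rewrite B3 B2 in E.
have H3 : 4 <= n.+1 by lia.
have := B_mono H3. rewrite B4. lia.
Qed.

Lemma Z_inj i n : i < n -> Z i <> Z n.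
Proof.
move=> Hin.
case: (leqP n 1) => Hn1.
  have -> : n = 1 by lia. have -> : i = 0 by lia. by [].
have Hn : 2 <= n by lia.
case: (leqP i 1) => Hi1.
  have := Z_ge2 Hn. case: i Hin Hi1 => [|[|]] // _ _; rewrite /Z /=; lia.
have Hi : 2 <= i by lia.
case: (Z_cases Hi) => -[Ei Fi]; case: (Z_cases Hn) => -[En Fn]; rewrite Fi Fn.
- move=> E.
  have H1 := B_no2 Hi.
  have H2 : i.+2 <= n.+1 by [].
  have := B_mono H2. lia.
- move=> E. have := B_mix Hi Hn En Ei. lia.
- move=> E. have := B_mix Hn Hi Ei En. lia.
- have H2 : i.+1 <= n.+1 by lia.
  have := B_mono H2. lia.
Qed.


Lemma M_F n : 0 < n -> forall v, v <= A n -> exists2 i, i < n & F i = v.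
Proof.
elim: n => [|n IH] // _ v Hv.
case: (posnP n) => Hn.
  subst n. exists 0 => //=. have : A 1 = 0 by []. lia.
case: (leqP v (A n)) => Hvn.
  have [i Hi Fi] := IH Hn v Hvn. exists i => //. lia.
have Ev : v = (A n).+1 by case: (A_S n) => E; lia.
case: (F_cases Hn) => -[En Fn].
  exists n => //. by rewrite Fn Ev.
set a := A n in Ev En Fn.
have Hn2 : 2 <= n.
  case: (leqP n 1) => // H. have E1 : n = 1 by lia. by rewrite /a E1 in En.
have P1 : (n.-1) * (n.-1) < a * (a + n.-1).
  have HH : A n.-1 <= a.-1 by lia.
  have := proj1 (A_le _ _) HH. have -> : a.-1.+1 = a by lia. by [].
have P2 : a.+1 * (a.+1 + n.+1) <= n.+1 * n.+1.
  have HH : a.+1 <= A n.+1 by lia.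
  exact: (proj1 (A_ge _ _) HH).
have P3 : n.+2 * n.+2 < a.+2 * (a.+2 + n.+2).
  have := A_no3 n.-1. have -> : n.-1.+3 = n.+2 by lia.
  move=> HH. have HH' : A n.+2 <= a.+1 by lia.
  exact: (proj1 (A_le _ _) HH').
have Hpos : 0 < A n by lia.
have Han := A_lt Hn.
clearbody a.
have Ht0 : n <= 2 * a.
  move: P3 Hn2; clear. nia.
set j := n - a. set t := (2 * a).+1 - n.
have Hj : j + a = n by rewrite /j; lia.
have Ht : t + n = (2 * a).+1 by rewrite /t; lia.
clearbody j t.
have Hj1 : 0 < j by lia.
have HAj : A j = t.
  apply/eqP; rewrite eqn_leq; apply/andP; split.
    apply/A_le. move: P3 Hj Ht; clear. nia.
  apply/A_ge. move: P2 Hj Ht; clear. nia.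
have HAj1 : A j.-1 <= t.-1.
  apply/A_le. have -> : t.-1.+1 = t by lia.
  move: P1 Hj Ht Hj1; clear. nia.
exists j; first lia.
case: (F_cases Hj1) => -[Ej Fj]; first lia.
rewrite Fj HAj. lia.
Qed.

Lemma B_lt n : 2 <= n -> B n < n.
Proof. move=> Hn. have := B_le_A Hn. have Hn0 : 0 < n by lia. have := A_lt Hn0. lia. Qed.

Lemma M_Z n : 0 < n -> forall v, v < B n.+1 -> exists2 i, i < n & Z i = v.
Proof.
elim: n => [|n IH] // _ v Hv.
case: (posnP n) => Hn.
  subst n. by rewrite B2 in Hv.
case: (ltnP v (B n.+1)) => Hvn.
  have [i Hi Fi] := IH Hn v Hvn. exists i => //. lia.
have Ev : v = B n.+1 by case: (B_S n.+1) => E; lia.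
case: (leqP n 1) => Hn1.
  have E1 : n = 1 by lia. subst n. exists 0 => //; rewrite Ev.
have Hn2 : 2 <= n by lia.
case: (Z_cases Hn2) => -[En Fn].
  exists n => //. by rewrite Fn Ev.
set b := B n.+1 in Ev En Fn.
have Q1 : n * n < b * (b + n) + 2.
  have HH : B n <= b.-1 by lia.
  have := proj1 (B_le _ Hn2) HH. have -> : b.-1.+1 = b by lia. by [].
have Q2 : b.+1 * (b.+1 + n.+2) + 2 <= n.+2 * n.+2.
  have HH : b.+1 <= B n.+2 by lia.
  exact: (proj1 (B_ge _ (_ : 2 <= n.+2)) HH).
have Q3 : n.+3 * n.+3 < b.+2 * (b.+2 + n.+3) + 2.
  have := B_no3 Hn2.
  move=> HH. have HH' : B n.+3 <= b.+1 by lia.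
  exact: (proj1 (B_le _ (_ : 2 <= n.+3)) HH').
clearbody b.
have Hbn : b < n by move: Q2; clear; nia.
have Ht0 : n <= 2 * b by move: Q3; clear; nia.
set j := n - b. set t := 2 * b - n.
have Hj : j + b = n by rewrite /j; lia.
have Ht : t + n = 2 * b by rewrite /t; lia.
clearbody j t.
have Hj1 : 0 < j by lia.
have HBj : B j.+1 = t.
  apply/eqP; rewrite eqn_leq; apply/andP; split.
    apply/B_le; first lia. move: Q3 Hj Ht; clear. nia.
  apply/B_ge; first lia. move: Q2 Hj Ht; clear. nia.
exists j; first lia.
case: (leqP j 1) => Hj2.
  have E1 : j = 1 by lia. subst j. rewrite B2 in HBj. rewrite Ev (_ : Z 1 = 1) //. lia.
have Hjt : j * j < t * (t + j) + 2 by move: Q1 Hj Ht; clear; nia.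
have Ht1 : 0 < t by move: Hjt Hj2; clear; nia.
have HBj1 : B j <= t.-1.
  apply/B_le; first lia. by have -> : t.-1.+1 = t by lia.
case: (Z_cases Hj2) => -[Ej Fj]; first lia.
rewrite Fj HBj. lia.
Qed.


Lemma notin_iota (g : nat -> nat) n m :
  (m \notin [seq g i | i <- iota 0 n]) <-> (forall i, i < n -> g i <> m).
Proof.
split.
  move=> H i Hi E. move/negP: H; apply. apply/mapP. exists i => //. rewrite mem_iota. lia.
move=> H. apply/negP => /mapP [i]. rewrite mem_iota => Hi E. apply: (H i); last by rewrite E. lia.
Qed.

Lemma sum_if lo n (g : nat -> nat) m : lo <= n ->
  \sum_(lo <= i < n.+1) (if i == n then m else g i) = \sum_(lo <= i < n) g i + m.
Proof.
move=> Hlo. rewrite big_nat_recr //= eqxx. congr (_ + _).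
apply: eq_big_nat => i /andP [_ Hi]. by rewrite ifN // neq_ltn Hi.
Qed.

Lemma greedy_unique lo d g h : greedy_seq lo d g -> greedy_seq lo d h -> forall n, g n = h n.
Proof.
move=> [g0 Hg] [h0 Hh] n. elim/ltn_ind: n => n IH.
case: (posnP n) => Hn; first by rewrite Hn g0 h0.
have Eq : forall m, greedy_ok lo d g n m <-> greedy_ok lo d h n m.
  move=> m. rewrite /greedy_ok.
  have -> : [seq g i | i <- iota 0 n] = [seq h i | i <- iota 0 n].
    apply/eq_in_map => i. rewrite mem_iota => Hi. apply: IH. lia.
  have -> : \sum_(lo <= i < n.+1) (if i == n then m else g i) =
            \sum_(lo <= i < n.+1) (if i == n then m else h i).
    apply: eq_big_nat => i /andP [_ Hi].
    case: ifP => // /negbT /eqP Hin. apply: IH. lia.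
  by [].
have [okg ming] := Hg n Hn. have [okh minh] := Hh n Hn.
apply/eqP. rewrite eqn_leq (ming _ (proj2 (Eq _) okh)) (minh _ (proj1 (Eq _) okg)). by [].
Qed.

Lemma F_min n m : 0 < n -> (forall i, i < n -> F i <> m) ->
  n %| \sum_(1 <= i < n) F i + m -> F n <= m.
Proof.
move=> Hn Hused Hd. case: (leqP (F n) m) => // Hlt. exfalso.
have Hd2 : n %| \sum_(1 <= i < n) F i + F n.
  rewrite -big_nat_recr //. have -> : n = n.-1.+1 by lia. rewrite sum_F. exact: dvdn_mulr.
have : n %| F n - m.
  have := dvdn_sub Hd2 Hd. by rewrite subnDl.
move/dvdnP => [c Hc].
have Han := A_lt Hn.
case: (F_cases Hn) => -[En Fn].
  have Hc1 : c = 1 by nia.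
  apply: (Hused 0) => //=. lia.
have Hc1 : c = 1 by clear Hd Hd2 Hused; nia.
have Hm : m = A n by lia.
have [i Hi Fi] := M_F Hn (leqnn (A n)).
apply: (Hused i Hi). lia.
Qed.

Lemma Z_min n m : 0 < n -> (forall i, i < n -> Z i <> m) ->
  n + 1 %| \sum_(2 <= i < n.+1) (if i == n then m else Z i) -> Z n <= m.
Proof.
move=> Hn Hused Hd. case: (leqP (Z n) m) => // Hlt. exfalso.
case: (leqP n 1) => Hn1.
  have E1 : n = 1 by lia. subst n. have := Hused 0 erefl. move: Hlt. rewrite /Z /=. lia.
have Hn2 : 2 <= n by lia.
rewrite sum_if // in Hd.
have Hd2 : n + 1 %| \sum_(2 <= i < n) Z i + Z n.
  rewrite -big_nat_recr //. rewrite sum_Z // addn1. exact: dvdn_mulr.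
have : n + 1 %| Z n - m.
  have := dvdn_sub Hd2 Hd. by rewrite subnDl.
move/dvdnP => [c Hc].
have Hbn' : B n.+1 < n.+1 by apply: B_lt; lia.
case: (Z_cases Hn2) => -[En Fn].
  move: Hc Hlt Hbn'; rewrite Fn; move: (B n.+1) => b. clear => H1 H2 H3. have H4 : c * (n + 1) < n + 1 by lia. have : c = 0 by nia. lia.
have Hc1 : c = 1 by clear Hd Hd2 Hused; nia.
have Hm : m = B n by lia.
have HH : B n < B n.+1 by lia.
have [i Hi Fi] := M_Z Hn HH.
apply: (Hused i Hi). lia.
Qed.

Lemma F_greedy : is_f F.
Proof.
split; first by [].
move=> n Hn. split.
  split.
    apply/notin_iota => i Hi. exact: F_inj Hi.
  rewrite sum_if // addn0 -big_nat_recr // sum_F. exact: dvdn_mulr.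
move=> m [Hm Hd]. apply: F_min => //.
  by apply/notin_iota.
by rewrite sum_if // addn0 in Hd.
Qed.

Lemma Z_greedy : is_z Z.
Proof.
split; first by [].
move=> n Hn. split.
  split.
    apply/notin_iota => i Hi. exact: Z_inj Hi.
  case: (leqP n 1) => Hn1.
    have E1 : n = 1 by lia. subst n. by rewrite big_geq.
  rewrite sum_if; last lia. rewrite -big_nat_recr; last lia.
  rewrite sum_Z // addn1. exact: dvdn_mulr.
move=> m [Hm Hd]. apply: Z_min => //.
by apply/notin_iota.
Qed.


Lemma fibSS k : fib k.+2 = fib k.+1 + fib k. Proof. by []. Qed.

Lemma cass_fwd N : forall m,
  (m * (m + N) + 1 = N * N -> exists k, N = fib k.*2.+1 /\ m = fib k.*2) /\
  (0 < N -> m * (m + N) = N * N + 1 -> exists k, N = fib k.*2.+2 /\ m = fib k.*2.+1).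
Proof.
elim/ltn_ind: N => N IH m. split.
  move=> H. case: (posnP m) => Hm.
    subst m. exists 0. rewrite /=. split; nia.
  have HmN : m < N by nia.
  set x := N - m. have Hx : x + m = N by rewrite /x; lia.
  clearbody x.
  have H2 : x * (x + m) = m * m + 1 by nia.
  have [k [E1 E2]] := (proj2 (IH m HmN x)) Hm H2.
  exists k.+1. rewrite doubleS !fibSS. rewrite fibSS in E1. lia.
move=> HN H.
case: (leqP N 1) => HN1.
  have E : N = 1 by lia. subst N. have Hm : m = 1 by nia. subst m.
  by exists 0.
have HmN : m < N by nia.
have Hm : 0 < m by nia.
set x := N - m. have Hx : x + m = N by rewrite /x; lia.
clearbody x.
have H2 : x * (x + m) + 1 = m * m by nia.
have [k [E1 E2]] := (proj1 (IH m HmN x)) H2.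
exists k. rewrite fibSS. lia.
Qed.

Lemma cass_bwd k :
  fib k.*2 * (fib k.*2 + fib k.*2.+1) + 1 = fib k.*2.+1 * fib k.*2.+1 /\
  fib k.*2.+1 * (fib k.*2.+1 + fib k.*2.+2) = fib k.*2.+2 * fib k.*2.+2 + 1.
Proof.
elim: k => [|k [IH1 IH2]] //.
rewrite doubleS.
have e2 : fib k.*2.+2 = fib k.*2.+1 + fib k.*2 by [].
have e3 : fib k.*2.+3 = fib k.*2.+2 + fib k.*2.+1 by [].
have e4 : fib k.*2.+4 = fib k.*2.+3 + fib k.*2.+2 by [].
rewrite e4 e3 e2. rewrite e2 in IH2.
move: (fib k.*2) (fib k.*2.+1) IH1 IH2 => x y H1 H2.
split; nia.
Qed.

Lemma key n : Z n = F n <-> (n = 0 \/ exists k : nat, n = fib k.*2.+1).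
Proof.
case: (leqP n 1) => Hn1.
  case: n Hn1 => [|[|]] // _.
    by split => // _; left.
  split => // _. right. by exists 0.
have Hn : 0 < n by lia.
have Hn2 : 2 <= n by lia.
have HAn := A_lt Hn.
have HA1 : 1 <= A n by have := A_mono Hn2; rewrite A2.
have HB1 : 1 <= B n.+1 by have := B_mono (_ : 3 <= n.+1); rewrite B3; apply; lia.
have HBn : B n.+1 < n.+1 by apply: B_lt; lia.
have HBA := B_le_A Hn2.
split.
  move=> E. right.
  case: (F_cases Hn) => -[En Fn]; case: (Z_cases Hn2) => -[Ez Fz]; rewrite Fn Fz in E.
  - lia.
  - lia.
  - lia.
  have H1 : B n <= (A n).-1 by lia.
  have H2 := proj1 (B_le _ Hn2) H1.
  have EE : (A n).-1.+1 = A n by lia. rewrite EE in H2.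
  have H3 := A_strict Hn.
  have H4 : A n * (A n + n) + 1 = n * n by lia.
  have [k [Ek _]] := proj1 (cass_fwd n (A n)) H4.
  by exists k.
case=> [|[k Ek]]; first lia.
have [C1 _] := cass_bwd k.
rewrite -Ek in C1.
move: C1. set m := fib k.*2 => C1. clearbody m.
have Hm : 1 <= m by move: C1 Hn2; clear; nia.
have HAm : A n = m.
  apply/eqP; rewrite eqn_leq; apply/andP; split.
    apply/A_le. move: C1; clear; nia.
  apply/A_ge. move: C1; clear; nia.
have HAm1 : A n.-1 <= m.-1.
  apply/A_le. have -> : m.-1.+1 = m by lia. move: C1 Hn2 Hm; clear; nia.
have HBn1 : B n <= m.-1.
  apply/(B_le _ Hn2). have -> : m.-1.+1 = m by lia. move: C1; clear; nia.
have HBm : B n.+1 = m.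
  apply/eqP; rewrite eqn_leq; apply/andP; split.
    apply/B_le; first lia. move: C1 Hn2 Hm; clear; nia.
  apply/B_ge; first lia. move: C1 Hn2 Hm; clear; nia.
case: (F_cases Hn) => -[En Fn]; first lia.
case: (Z_cases Hn2) => -[Ez Fz]; first lia.
rewrite Fn Fz HAm HBm. lia.
Qed.

Theorem mainTheorem8 (f z : nat -> nat) :
  is_f f -> is_z z ->
  forall n : nat, z n = f n <-> (n = 0 \/ exists k : nat, n = fib k.*2.+1).
Proof.
move=> Hf Hz n.
rewrite (greedy_unique Hf F_greedy) (greedy_unique Hz Z_greedy).
exact: key.
Qed.
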